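(* Let $q=p^e$ with $p>3$ prime and $e\ge1$, and let $n\ge 1$ be an integer. If $D_{n,3}(1,x)$ is a permutation polynomial of $\mathbb{F}_q$, then $n\equiv 2\pmod 6$.
   Context: For $n\ge 1$ and $a\in\mathbb{F}_q$, $D_{n,3}(a,x)=\sum_{i=0}^{\lfloor n/2\rfloor}\frac{n-3i}{n-i}\binom{n-i}{i}(-x)^i a^{n-2i}\in\mathbb{F}_q[x]$, where each coefficient $\frac{n-3i}{n-i}\binom{n-i}{i}$ is an integer read modulo $p$; and $D_{0,3}(a,x)=-1$. A polynomial $g\in\mathbb{F}_q[x]$ is a permutation polynomial of $\mathbb{F}_q$ if $c\mapsto g(c)$ is a bijection $\mathbb{F}_q\to\mathbb{F}_q$. *)

(* Defs.v *)
From HB Require Import structures.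
From mathcomp Require Import all_boot all_order all_algebra all_field.
Set Implicit Arguments. Unset Strict Implicit. Unset Printing Implicit Defensive.
Import GRing.Theory.
Local Open Scope ring_scope.

(* The integer coefficient ((n - 3i)/(n - i)) * C(n-i, i), computed literally
   as the exact integer quotient ((n - 3i) * C(n-i,i)) / (n - i). *)
Definition dickson3_coef (n i : nat) : int :=
  ((((n%:Z - 3 * i%:Z) * ('C(n - i, i))%:Z)) %/ ((n - i)%N)%:Z)%Z.

Definition dickson3 (F : ringType) (n : nat) (a : F) : {poly F} :=
  if n is 0 then -1 else
  \sum_(i < n./2.+1) ((dickson3_coef n i)%:~R * a ^+ (n - 2 * i)) *: (- 'X) ^+ i.

Definition is_perm_poly (F : finFieldType) (g : {poly F}) : Prop :=
  bijective (fun c : F => g.[c]).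

(* Main.v *)
Require Import Defs.
From HB Require Import structures.
From mathcomp Require Import all_boot all_order all_algebra all_field.
From mathcomp Require Import zify ring.
Set Implicit Arguments. Unset Strict Implicit. Unset Printing Implicit Defensive.
Import GRing.Theory.
Local Open Scope ring_scope.

Lemma sum_ext (R : nmodType) (f : nat -> R) a k :
  (forall i, (a <= i)%N -> f i = 0) -> (a <= k)%N ->
  \sum_(0 <= i < k) f i = \sum_(0 <= i < a) f i.
Proof.
move=> H; elim: k => [|k IH]; first by rewrite leqn0 => /eqP ->.
rewrite leq_eqVlt => /orP [/eqP <-|Hk] //.
by rewrite big_nat_recr //= IH // H // addr0.
Qed.

Definition Ek (F : comRingType) (t : F) n k :=
  \sum_(0 <= i < k) ('C(n - i, i))%:R * t ^+ i.

Lemma Ek_full (F : comRingType) (t : F) n k : (n < k)%N -> Ek t n k = Ek t n n.+1.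
Proof.
move=> Hk; apply: sum_ext => // i Hi; rewrite bin_small ?mul0r //; lia.
Qed.

Lemma E_rec (F : comRingType) (t : F) n :
  Ek t n.+2 n.+3 = Ek t n.+1 n.+2 + t * Ek t n n.+1.
Proof.
have h1 : Ek t n.+2 n.+3 = 1 + \sum_(0<=i<n.+1)
   (('C(n-i,i.+1))%:R * t^+i.+1 + t * (('C(n-i,i))%:R * t^+i)).
  rewrite /Ek (@sum_ext _ _ n.+2); last by [].
    rewrite big_nat_recl //= subn0 bin0 mul1r expr0; congr (_ + _).
    apply: eq_big_nat => i /andP[_ Hi].
    rewrite subSS; have ->: (n.+1 - i = (n - i).+1)%N by lia.
    rewrite binS natrD exprS; ring.
  move=> i Hi; rewrite bin_small ?mul0r //; lia.
have h2 : Ek t n.+1 n.+2 = 1 + \sum_(0<=i<n.+1) ('C(n-i,i.+1))%:R * t^+i.+1.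
  by rewrite /Ek big_nat_recl //= subn0 bin0 mul1r expr0.
by rewrite h1 h2 big_split /= -mulr_sumr addrA.
Qed.
Lemma coefE n i : (2*i <= n)%N -> (0<n)%N ->
  dickson3_coef n i = ('C(n-i,i))%:Z - 2 * ((if i is j.+1 then 'C((n-i).-1, j) else 0%N))%:Z.
Proof.
move=> H2 Hn; rewrite /dickson3_coef.
have Hd : ((n-i)%N)%:Z != 0 by apply/eqP; lia.
rewrite -[RHS](mulzK _ Hd); congr (_ %/ _)%Z.
move: H2 Hd; case: i => [|j] H2 Hd.
  rewrite subn0 !mulr0 subr0 mulrC; lia.
have key := mul_bin_diag (n - j.+1) j.
nia.
Qed.

Lemma dick_eval (F : comRingType) (c : F) m :
  (dickson3 m.+2 1).[c] = Ek (-c) m.+2 m.+3 - 2 * (-c) * Ek (-c) m m.+1.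
Proof.
set t := - c.
rewrite /dickson3 horner_sum.
under eq_bigr => i _ do rewrite hornerZ horner_exp hornerN hornerX expr1n mulr1.
rewrite -(big_mkord xpredT (fun i => (dickson3_coef m.+2 i)%:~R * t ^+ i)).
pose B i := (if i is j.+1 then 'C((m.+2-i).-1, j) else 0%N).
have e1 : \sum_(0 <= i < (m.+2)./2.+1) (dickson3_coef m.+2 i)%:~R * t ^+ i =
   \sum_(0 <= i < (m.+2)./2.+1) (('C(m.+2 - i, i))%:R * t ^+ i - 2 * ((B i)%:R * t ^+ i)).
  apply: eq_big_nat => i /andP[_ Hi].
  rewrite coefE //; last by move: Hi; rewrite ltnS geq_half_double; lia.
  rewrite rmorphB /= rmorphM /= !pmulrn /B; ring.
rewrite e1 -(@sum_ext _ _ _ m.+3); last first.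
- have : ((m.+2)./2 < m.+3)%N by rewrite ltn_half_double; lia.
  lia.
- move=> i; rewrite ltn_half_double => Hi.
  rewrite bin_small ?mul0r; last by lia.
  rewrite /B; case: i Hi => [|j] Hi; first by rewrite mul0r mulr0 subr0.
  rewrite bin_small ?mul0r ?mulr0 ?subr0 //; lia.
rewrite sumrB -mulr_sumr /Ek -mulrA; congr (_ - 2 * _).
rewrite big_nat_recl // /B /= mul0r add0r mulr_sumr.
rewrite -mulr_sumr; have -> : \sum_(0<=i<m.+1) ('C(m-i,i))%:R * t^+i = Ek t m m.+2 by rewrite Ek_full.
rewrite /Ek mulr_sumr.
apply: eq_big_nat => i /andP[_ Hi].
have ->: ((m.+2 - i.+1).-1 = m - i)%N by lia.
rewrite exprS; ring.
Qed.

Definition E (F : comRingType) (t : F) n := Ek t n n.+1.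

Lemma E0 (F : comRingType) (t : F) : E t 0 = 1.
Proof. by rewrite /E /Ek big_nat1 bin0 mul1r expr0. Qed.

Lemma E1 (F : comRingType) (t : F) : E t 1 = 1.
Proof. by rewrite /E /Ek big_nat_recr //= big_nat1 bin0 mul1r expr0 bin_small // mul0r addr0. Qed.

Lemma Erec (F : comRingType) (t : F) n : E t n.+2 = E t n.+1 + t * E t n.
Proof. exact: E_rec. Qed.

Lemma E_t2 (F : comRingType) n : 3 * E (2 : F) n = 2 ^+ n.+1 + (-1) ^+ n.
Proof.
suff: 3 * E (2 : F) n = 2 ^+ n.+1 + (-1) ^+ n /\ 3 * E (2 : F) n.+1 = 2 ^+ n.+2 + (-1) ^+ n.+1 by case.
elim: n => [|n [IH1 IH2]]; first by rewrite E0 E1 !expr0 !expr2 !expr1; split; ring.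
split => //; rewrite Erec mulrDr IH2 mulrCA IH1 !exprS; ring.
Qed.

Lemma E_t0 (F : comRingType) n : E (0 : F) n = 1.
Proof.
suff: E (0:F) n = 1 /\ E (0:F) n.+1 = 1 by case.
elim: n => [|n [IH1 IH2]]; first by rewrite E0 E1.
by split => //; rewrite Erec IH2 mul0r addr0.
Qed.

Lemma E_tm1 (F : comRingType) k :
  E (-1 : F) (6*k) = 1 /\ E (-1 : F) (6*k).+1 = 1 /\ E (-1 : F) (6*k).+2 = 0 /\
      E (-1 : F) (6*k).+3 = -1 /\ E (-1 : F) (6*k).+4 = -1 /\ E (-1 : F) (6*k).+4.+1 = 0.
Proof.
elim: k => [|k [H0 [H1 [H2 [H3 [H4 H5]]]]]].
  rewrite muln0 !Erec E0 E1; do ! split; ring.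
have ->: (6 * k.+1 = (6*k).+4.+2)%N by lia.
rewrite !Erec H0 H1; do ! split; ring.
Qed.

Lemma dick_eval' (F : comRingType) (c : F) m :
  (dickson3 m.+2 1).[c] = E (-c) m.+2 - 2 * (-c) * E (-c) m.
Proof. exact: dick_eval. Qed.

Theorem theorem3p1 (F : finFieldType) (p e n : nat) :
  prime p -> (3 < p)%N -> p \in [pchar F] -> (1 <= e)%N -> #|F| = (p ^ e)%N ->
  (1 <= n)%N ->
  is_perm_poly (dickson3 n (1 : F)) ->
  n = 2 %[mod 6].
Proof.
move=> Pp Hp3 Hch He Hcard Hn [ginv Hg1 Hg2].
have inj := can_inj Hg1; clear Hg1 Hg2.
have two0 : (2:F) != 0.
  by rewrite -(dvdn_pcharf Hch); apply/negP => /dvdn_leq; lia.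
have three0 : (3:F) != 0.
  by rewrite -(dvdn_pcharf Hch); apply/negP => /dvdn_leq; lia.
move: inj; case: n Hn => [//|]; case => [_|m _] inj.
  have h : (dickson3 1 (1:F)).[0] = (dickson3 1 (1:F)).[-2].
    by rewrite /dickson3 !horner_sum !big_ord1 !hornerZ !expr0 !hornerC.
  by move/inj: h => /eqP; rewrite eq_sym oppr_eq0 (negbTE two0).
have g0 : (dickson3 m.+2 (1:F)).[0] = 1.
  by rewrite dick_eval' oppr0 !E_t0 mulr0 mul0r subr0.
have g2 : (dickson3 m.+2 (1:F)).[-2] = - (-1) ^+ m.
  rewrite dick_eval' opprK; apply: (mulfI three0).
  have -> : 3 * (E (2:F) m.+2 - 2 * 2 * E 2 m) = 3 * E (2:F) m.+2 - 2 * 2 * (3 * E 2 m) by ring.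
  rewrite !E_t2 !exprS; ring.
case Hodd: (odd m).
  have h : (dickson3 m.+2 (1:F)).[-2] = (dickson3 m.+2 (1:F)).[0].
    by rewrite g2 g0 -signr_odd Hodd expr1 opprK.
  move: (inj _ _ h) => /eqP.
  by rewrite oppr_eq0 (negbTE two0).
have Hm : m = (2 * m./2)%N by rewrite mul2n even_halfK ?Hodd.
have : (m.+2 %% 6 = 0 \/ m.+2 %% 6 = 2 \/ m.+2 %% 6 = 4)%N by lia.
case=> [H0|[H2|H4]]; last 1 first.
- have [k Hk] : exists k, m = (6 * k).+2 by exists (m.+2 %/ 6)%N; lia.
  subst m.
  have g1 : (dickson3 (6*k).+4 (1:F)).[1] = -1.
    have [_ [_ [E2 [_ [E4 _]]]]] := E_tm1 F k.
    by rewrite dick_eval' E4 E2; ring.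
  have h : (dickson3 (6*k).+4 (1:F)).[-2] = (dickson3 (6*k).+4 (1:F)).[1].
    by rewrite g2 g1 -signr_odd Hodd expr0.
  move: (inj _ _ h) => /eqP.
  move/eqP => h3; move: three0; have -> : (3:F) = 1 - -2 by ring.
  by rewrite h3 subrr eqxx.
- have [k Hk] : exists k, m = (6 * k).+4 by exists (m.+2 %/ 6 - 1)%N; lia.
  subst m.
  have g1 : (dickson3 (6*k).+4.+2 (1:F)).[1] = -1.
    have [_ [_ [_ [_ [E4 E5]]]]] := E_tm1 F k.
    by rewrite dick_eval' Erec E4 E5; ring.
  have h : (dickson3 (6*k).+4.+2 (1:F)).[-2] = (dickson3 (6*k).+4.+2 (1:F)).[1].
    by rewrite g2 g1 -signr_odd Hodd expr0.
  move: (inj _ _ h) => /eqP.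
  move/eqP => h3; move: three0; have -> : (3:F) = 1 - -2 by ring.
  by rewrite h3 subrr eqxx.
- by rewrite H2.
Qed.
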